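(* Suppose $v_{j1}^2+v_{j2}^2\neq0$ for $j=1$ and for $j=2$. Then, in the coordinates $[z_0,z_1,z_2,z_3,x]$, the points of $HC_F(\mathbf v,d)$ with $z_0z_1=0$ are exactly the eight points $[-1,0,1,0,0]$, $[0,-1,0,1,0]$, $[0,1,0,1,0]$, $[1,0,1,0,0]$, $[0,0,1,1,\sqrt{-1}]$, $[0,0,1,1,-\sqrt{-1}]$, $[0,0,1,-1,\sqrt{-1}]$, $[0,0,1,-1,-\sqrt{-1}]$. Equivalently, in the coordinates $[u,y_1,y_2,r_1,r_2]$, the set of points of $HC_F(\mathbf v,d)$ with $r_1r_2=0$ is this set of eight points.
   Context: On $\mathbb{C}P^4$ use homogeneous coordinates $[u,y_1,y_2,r_1,r_2]$ and the linearly equivalent coordinates $z_0=4r_1$, $z_1=4r_2$, $z_2=4(u-y_1)$, $z_3=-4(u+y_1)$, $x=-4y_2$. For parameters $[\mathbf v,d]=[v_{11},v_{12},v_{21},v_{22},d]\in\mathbb{C}P^4$ (complex, not all zero), $HC_F(\mathbf v,d)$ is defined by $z_2^2-z_0^2-(z_3^2-z_1^2)=0$, $x^2+z_2^2-z_0^2=0$, and $(v_{22}z_0-v_{12}z_1)x+v_{21}z_0z_3-v_{11}z_1z_2-dz_0z_1=0$; in the original coordinates these are $(u-y_1)^2+y_2^2=r_1^2$, $(u+y_1)^2+y_2^2=r_2^2$, and $L_2r_1-L_1r_2-dr_1r_2=0$ with $L_1=v_{11}(u-y_1)-v_{12}y_2$, $L_2=-v_{21}(u+y_1)-v_{22}y_2$.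 *)

(* Defs.v *)
From HB Require Import structures.
From mathcomp Require Import all_boot all_order all_algebra.
From mathcomp Require Import complex.
From mathcomp Require Import Rstruct.
Set Implicit Arguments. Unset Strict Implicit. Unset Printing Implicit Defensive.
Import Order.TTheory GRing.Theory Num.Theory.
Local Open Scope ring_scope.

Definition CC : numClosedFieldType := Rdefinitions.R[i].

(* A point of CP^4 is represented by a nonzero vector of homogeneous
   coordinates in C^5; two representatives give the same point iff they
   are proportional by a nonzero scalar. *)
Definition vec5 := 'rV[CC]_5.

Definition mk5 (a b c e f : CC) : vec5 :=
  \row_(i < 5) nth 0 [:: a; b; c; e; f] i.

Definition co (p : vec5) (k : nat) : CC := p ord0 (inord k).

Definition same_point (p q : vec5) : Prop :=
  exists2 c : CC, c != 0 & p = c *: q.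

(* Parameters [v, d] = [v11, v12, v21, v22, d] *)
Definition HCF_z (v11 v12 v21 v22 d : CC) (p : vec5) : Prop :=
  let z0 := co p 0 in let z1 := co p 1 in let z2 := co p 2 in
  let z3 := co p 3 in let x := co p 4 in
  [/\ z2 ^+ 2 - z0 ^+ 2 - (z3 ^+ 2 - z1 ^+ 2) = 0,
      x ^+ 2 + z2 ^+ 2 - z0 ^+ 2 = 0 &
      (v22 * z0 - v12 * z1) * x + v21 * z0 * z3 - v11 * z1 * z2
        - d * z0 * z1 = 0].

Definition HCF_u (v11 v12 v21 v22 d : CC) (p : vec5) : Prop :=
  let u := co p 0 in let y1 := co p 1 in let y2 := co p 2 in
  let r1 := co p 3 in let r2 := co p 4 in
  let L1 := v11 * (u - y1) - v12 * y2 in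
  let L2 := - v21 * (u + y1) - v22 * y2 in
  [/\ (u - y1) ^+ 2 + y2 ^+ 2 = r1 ^+ 2,
      (u + y1) ^+ 2 + y2 ^+ 2 = r2 ^+ 2 &
      L2 * r1 - L1 * r2 - d * r1 * r2 = 0].

Definition z_of_u (p : vec5) : vec5 :=
  let u := co p 0 in let y1 := co p 1 in let y2 := co p 2 in
  let r1 := co p 3 in let r2 := co p 4 in
  mk5 (4 * r1) (4 * r2) (4 * (u - y1)) (- (4 * (u + y1))) (- (4 * y2)).

Definition eight_points : seq vec5 :=
  [:: mk5 (-1) 0 1 0 0; mk5 0 (-1) 0 1 0; mk5 0 1 0 1 0; mk5 1 0 1 0 0;
      mk5 0 0 1 1 'i; mk5 0 0 1 1 (- 'i);
      mk5 0 0 1 (-1) 'i; mk5 0 0 1 (-1) (- 'i)].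

(* Main.v *)
Require Import Defs.
From HB Require Import structures.
From mathcomp Require Import all_boot all_order all_algebra.
From mathcomp Require Import complex Rstruct.
From mathcomp Require Import ring lra.
Import Order.TTheory GRing.Theory Num.Theory.
Local Open Scope ring_scope.
Lemma co_mk a b c e f : [/\ co (mk5 a b c e f) 0 = a, co (mk5 a b c e f) 1 = b,
  co (mk5 a b c e f) 2 = c, co (mk5 a b c e f) 3 = e & co (mk5 a b c e f) 4 = f].
Proof. by rewrite /co /mk5 !mxE !inordK. Qed.
Lemma co_scale k p n : co (k *: p) n = k * co p n.
Proof. by rewrite /co mxE. Qed.
Lemma mk5_co p : p = mk5 (co p 0) (co p 1) (co p 2) (co p 3) (co p 4).
Proof.
apply/rowP => i; rewrite /co /mk5 mxE.
have -> : ord0 = 0 :> 'I_1 by apply/val_inj.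
case: i => [[|[|[|[|[|i]]]]] hi] //=; congr (p _ _); apply/val_inj; by rewrite /= inordK.
Qed.
Lemma t16 : (16 : CC) != 0. Proof. by rewrite pnatr_eq0. Qed.
Lemma sq_pm (x y : CC) : x ^+ 2 = y ^+ 2 -> x = y \/ x = - y.
Proof. by move/eqP; rewrite eqf_sqr => /orP[/eqP|/eqP]; [left|right]. Qed.
Lemma sq_i (x y : CC) : x ^+ 2 + y ^+ 2 = 0 -> x = 'i * y \/ x = - ('i * y).
Proof. move=> h; apply: sq_pm; rewrite exprMn sqrCi; apply/eqP; rewrite -subr_eq0.
by rewrite -h; apply/eqP; ring. Qed.
Lemma sq0 (x : CC) : x ^+ 2 = 0 -> x = 0.
Proof. by move/eqP; rewrite expf_eq0 /= => /eqP. Qed.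
Lemma lin_kill (v1 v2 x y : CC) : v1 ^+ 2 + v2 ^+ 2 != 0 ->
  v1 * y + v2 * x = 0 -> x ^+ 2 + y ^+ 2 = 0 -> y = 0.
Proof.
move=> hv h1 h2.
have : y ^+ 2 * (v1 ^+ 2 + v2 ^+ 2) = 0.
  have -> : y ^+ 2 * (v1 ^+ 2 + v2 ^+ 2) = (v1 * y + v2 * x) * (v1 * y - v2 * x) + v2 ^+ 2 * (x ^+ 2 + y ^+ 2) by ring.
  by rewrite h1 h2; ring.
by move/eqP; rewrite mulf_eq0 (negbTE hv) orbF => /eqP /sq0.
Qed.
Lemma iM (k : CC) : (k * 'i) ^+ 2 = - k ^+ 2.
Proof. by rewrite exprMn sqrCi mulrN1. Qed.
Lemma iMN (k : CC) : (k * - 'i) ^+ 2 = - k ^+ 2.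
Proof. by rewrite exprMn sqrrN sqrCi mulrN1. Qed.
Lemma from_eq (k : CC) {x y : CC} : y = 0 -> x = k * y -> x = 0.
Proof. by move=> -> ->; rewrite mulr0. Qed.
Lemma from_eq2 (k1 k2 : CC) {x y1 y2 : CC} : y1 = 0 -> y2 = 0 -> x = k1 * y1 + k2 * y2 -> x = 0.
Proof. by move=> -> -> ->; rewrite !mulr0 addr0. Qed.
Lemma cancel_nz (b x : CC) : b != 0 -> b * x = 0 -> x = 0.
Proof. by move=> hb /eqP; rewrite mulf_eq0 (negbTE hb) => /eqP. Qed.
Arguments sq_pm {x y}. Arguments sq_i {x y}. Arguments sq0 {x}.
Arguments lin_kill {v1 v2 x y}. Arguments cancel_nz {b x}.
Definition Eqs (v11 v12 v21 v22 d a b c e f : CC) :=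
  [/\ c ^+ 2 - a ^+ 2 - (e ^+ 2 - b ^+ 2) = 0,
      f ^+ 2 + c ^+ 2 - a ^+ 2 = 0 &
      (v22 * a - v12 * b) * f + v21 * a * e - v11 * b * c - d * a * b = 0].

Lemma fwd {v11 v12 v21 v22 d a b c e f} :
  v11 ^+ 2 + v12 ^+ 2 != 0 -> v21 ^+ 2 + v22 ^+ 2 != 0 ->
  ~ [/\ a = 0, b = 0, c = 0, e = 0 & f = 0] ->
  Eqs v11 v12 v21 v22 d a b c e f -> a * b = 0 ->
  exists2 q, q \in eight_points & exists2 k : CC, k != 0 & mk5 a b c e f = k *: q.
Proof.
move=> h1 h2 hnz [E1 E2 E3] hab.
have [ha|ha] := eqVneq a 0.
- subst a. have [hb|hb] := eqVneq b 0.
  + subst b.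
    have hc : c != 0.
      apply/eqP => hc; apply: hnz; subst c.
      have hf : f = 0 by apply: sq0; rewrite -E2; ring.
      have he : e = 0 by apply: sq0; apply: (from_eq (-1) E1); ring.
      by [].
    have hf : f ^+ 2 + c ^+ 2 = 0 by rewrite -E2; ring.
    have he : e ^+ 2 = c ^+ 2 by apply/eqP; rewrite -subr_eq0; apply/eqP; apply: (from_eq (-1) E1); ring.
    case: (sq_i hf) => -> ; case: (sq_pm he) => ->.
    * exists (mk5 0 0 1 1 'i); first by rewrite !inE eqxx ?orbT.
      exists c => //; apply/rowP => i; rewrite !mxE; case: i => [[|[|[|[|[|i]]]]] hi] //=; ring.
    * exists (mk5 0 0 1 (-1) 'i); first by rewrite !inE eqxx ?orbT.
      exists c => //; apply/rowP => i; rewrite !mxE; case: i => [[|[|[|[|[|i]]]]] hi] //=; ring.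
    * exists (mk5 0 0 1 1 (-'i)); first by rewrite !inE eqxx ?orbT.
      exists c => //; apply/rowP => i; rewrite !mxE; case: i => [[|[|[|[|[|i]]]]] hi] //=; ring.
    * exists (mk5 0 0 1 (-1) (-'i)); first by rewrite !inE eqxx ?orbT.
      exists c => //; apply/rowP => i; rewrite !mxE; case: i => [[|[|[|[|[|i]]]]] hi] //=; ring.
  + have hl : v11 * c + v12 * f = 0.
      apply: (@cancel_nz (-b) _); first by rewrite oppr_eq0.
      apply: (from_eq 1 E3); ring.
    have hf2 : f ^+ 2 + c ^+ 2 = 0 by rewrite -E2; ring.
    have hc := lin_kill h1 hl hf2. subst c.
    have hf : f = 0 by apply: sq0; rewrite -hf2; ring.
    subst f.
    have he : e ^+ 2 = b ^+ 2 by apply/eqP; rewrite -subr_eq0; apply/eqP; apply: (from_eq (-1) E1); ring.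
    case: (sq_pm he) => ->.
    * exists (mk5 0 1 0 1 0); first by rewrite !inE eqxx ?orbT.
      exists b => //; apply/rowP => i; rewrite !mxE; case: i => [[|[|[|[|[|i]]]]] hi] //=; ring.
    * exists (mk5 0 (-1) 0 1 0); first by rewrite !inE eqxx ?orbT.
      exists (-b); first by rewrite oppr_eq0.
      apply/rowP => i; rewrite !mxE; case: i => [[|[|[|[|[|i]]]]] hi] //=; ring.
- have hb : b = 0 by apply: (cancel_nz ha).
  subst b.
  have hl : v21 * e + v22 * f = 0.
    apply: (cancel_nz ha).
    apply: (from_eq 1 E3); ring.
  have hf2 : f ^+ 2 + e ^+ 2 = 0.
    apply: (from_eq2 1 (-1) E2 E1); ring.
  have he := lin_kill h2 hl hf2. subst e.
  have hf : f = 0 by apply: sq0; rewrite -hf2; ring.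
  subst f.
  have hc : c ^+ 2 = a ^+ 2 by apply/eqP; rewrite -subr_eq0; apply/eqP; rewrite -E2; ring.
  case: (sq_pm hc) => ->.
  * exists (mk5 1 0 1 0 0); first by rewrite !inE eqxx ?orbT.
    exists a => //; apply/rowP => i; rewrite !mxE; case: i => [[|[|[|[|[|i]]]]] hi] //=; ring.
  * exists (mk5 (-1) 0 1 0 0); first by rewrite !inE eqxx ?orbT.
    exists (-a); first by rewrite oppr_eq0.
    apply/rowP => i; rewrite !mxE; case: i => [[|[|[|[|[|i]]]]] hi] //=; ring.
Qed.
Lemma co_mk0 a b c e f : co (mk5 a b c e f) 0 = a. Proof. by case: (co_mk a b c e f). Qed.
Lemma co_mk1 a b c e f : co (mk5 a b c e f) 1 = b. Proof. by case: (co_mk a b c e f). Qed.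
Lemma co_mk2 a b c e f : co (mk5 a b c e f) 2 = c. Proof. by case: (co_mk a b c e f). Qed.
Lemma co_mk3 a b c e f : co (mk5 a b c e f) 3 = e. Proof. by case: (co_mk a b c e f). Qed.
Lemma co_mk4 a b c e f : co (mk5 a b c e f) 4 = f. Proof. by case: (co_mk a b c e f). Qed.

Lemma bwd v11 v12 v21 v22 d p q : q \in eight_points -> same_point p q ->
  HCF_z v11 v12 v21 v22 d p /\ co p 0 * co p 1 = 0.
Proof.
move=> hq [k _ ->]; move: hq; rewrite /HCF_z !co_scale.
rewrite !inE => /orP[/eqP->|/orP[/eqP->|/orP[/eqP->|/orP[/eqP->|/orP[/eqP->|/orP[/eqP->|/orP[/eqP->|/eqP->]]]]]]];
rewrite !co_mk0 !co_mk1 !co_mk2 !co_mk3 !co_mk4 ?iM ?iMN; (split; [split|]); ring.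
Qed.

Lemma part1 v11 v12 v21 v22 d :
  (v11 ^+ 2 + v12 ^+ 2 != 0) -> (v21 ^+ 2 + v22 ^+ 2 != 0) ->
  (forall p : vec5, p != 0 ->
     (HCF_z v11 v12 v21 v22 d p /\ co p 0 * co p 1 = 0) <->
     (exists2 q, q \in eight_points & same_point p q)).
Proof.
move=> h1 h2 p hp; split.
- move=> [H hab].
  have hnz : ~ [/\ co p 0 = 0, co p 1 = 0, co p 2 = 0, co p 3 = 0 & co p 4 = 0].
    by move=> [e0 e1 e2 e3 e4]; move/eqP: hp; apply; rewrite (mk5_co p) e0 e1 e2 e3 e4;
      apply/rowP => i; rewrite !mxE; case: i => [[|[|[|[|[|i]]]]] hi].
  have [q hq [k hk hpk]] := fwd (d:=d) h1 h2 hnz H hab.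
  by exists q => //; exists k => //; rewrite (mk5_co p).
- by move=> [q hq hs]; apply: bwd hq hs.
Qed.

Lemma t4 : (4 : CC) != 0. Proof. by rewrite pnatr_eq0. Qed.

Lemma part2 v11 v12 v21 v22 d p :
  (HCF_u v11 v12 v21 v22 d p <-> HCF_z v11 v12 v21 v22 d (z_of_u p)) /\
  co (z_of_u p) 0 * co (z_of_u p) 1 = 16 * (co p 3 * co p 4) /\
  (p != 0 -> z_of_u p != 0).
Proof.
rewrite /HCF_u /HCF_z /z_of_u !co_mk0 !co_mk1 !co_mk2 !co_mk3 !co_mk4.
move: (co p 0) (co p 1) (co p 2) (co p 3) (co p 4) (mk5_co p) => u y1 y2 r1 r2 hp.
split; last split.
- split.
  + move=> [U1 U2 U3]; split.
    * apply: (from_eq2 16 (-16) (x:=_) (y1 := (u - y1) ^+ 2 + y2 ^+ 2 - r1 ^+ 2) (y2 := (u + y1) ^+ 2 + y2 ^+ 2 - r2 ^+ 2)).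
      - by rewrite U1 subrr. - by rewrite U2 subrr. - ring.
    * apply: (from_eq 16 (y := (u - y1) ^+ 2 + y2 ^+ 2 - r1 ^+ 2)); [by rewrite U1 subrr| ring].
    * apply: (from_eq 16 U3); ring.
  + move=> [Z1 Z2 Z3].
    have D1 : (u - y1) ^+ 2 + y2 ^+ 2 - r1 ^+ 2 = 0.
      apply: (@cancel_nz 16); first by rewrite pnatr_eq0.
      rewrite -Z2; ring.
    have D2 : (u + y1) ^+ 2 + y2 ^+ 2 - r2 ^+ 2 = 0.
      apply: (@cancel_nz 16); first by rewrite pnatr_eq0.
      apply: (from_eq2 1 (-1) Z2 Z1); ring.
    split.
    * by apply/eqP; rewrite -subr_eq0; apply/eqP.
    * by apply/eqP; rewrite -subr_eq0; apply/eqP.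
    * apply: (@cancel_nz 16); first by rewrite pnatr_eq0.
      rewrite -Z3; ring.
- ring.
- apply: contra => /eqP hz.
  have := congr1 (fun P => co P 0) hz; have := congr1 (fun P => co P 1) hz;
  have := congr1 (fun P => co P 2) hz; have := congr1 (fun P => co P 3) hz;
  have := congr1 (fun P => co P 4) hz.
  rewrite /= !co_mk0 !co_mk1 !co_mk2 !co_mk3 !co_mk4 /co !mxE /=.
  move=> e4 e3 e2 e1 e0.
  have hr1 : r1 = 0 by apply: (cancel_nz t4).
  have hr2 : r2 = 0 by apply: (cancel_nz t4).
  have hy2 : y2 = 0 by apply: (@cancel_nz (-4)); [rewrite oppr_eq0 t4 | rewrite -e4; ring].
  have hd : u - y1 = 0 by apply: (cancel_nz t4).
  have hs : u + y1 = 0 by apply: (@cancel_nz (-4)); [rewrite oppr_eq0 t4 | rewrite -e3; ring].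
  have hu : u = 0.
    apply: (@cancel_nz 2); first by rewrite pnatr_eq0.
    apply: (from_eq2 1 1 hd hs); ring.
  have hy1 : y1 = 0 by move: hs; rewrite hu add0r.
  rewrite hp hr1 hr2 hy2 hu hy1; apply/eqP/rowP => i; rewrite !mxE; case: i => [[|[|[|[|[|i]]]]] hi] //.
Qed.

Theorem lemma5p7 (v11 v12 v21 v22 d : CC) :
  (v11 ^+ 2 + v12 ^+ 2 != 0) -> (v21 ^+ 2 + v22 ^+ 2 != 0) ->
  (forall p : vec5, p != 0 ->
     (HCF_z v11 v12 v21 v22 d p /\ co p 0 * co p 1 = 0) <->
     (exists2 q, q \in eight_points & same_point p q))
  /\
  (forall p : vec5, p != 0 ->
     (HCF_u v11 v12 v21 v22 d p /\ co p 3 * co p 4 = 0) <->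
     (exists2 q, q \in eight_points & same_point (z_of_u p) q)).
Proof.
move=> h1 h2; split; first exact: part1.
move=> p hp.
have [E [M N]] := part2 v11 v12 v21 v22 d p.
have P1 := @part1 v11 v12 v21 v22 d h1 h2 _ (N hp).
split.
- move=> [H1 H2]; apply/P1; split; first by apply/E.
  by rewrite M H2 mulr0.
- move/P1 => [H1 H2]; split; first by apply/E.
  apply: (@cancel_nz 16); first by rewrite pnatr_eq0.
  by rewrite -M.
Qed.
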